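(* Let $Q$ be a QNP and let $Q_M$ be the QNP obtained from $P=T(Q)$ as described in the context. If a policy $\pi$ solves the FOND problem $P=T(Q)$ (i.e. is a strong cyclic solution of it), then $\pi$ solves the QNP $Q_M$.
   Context: QNPs: $Q=\langle F,V,I,O,G\rangle$ with propositional variables $F$, numerical variables $V$ (non-negative reals), literals $p,\neg p$, $X=0$, $X>0$; actions with precondition $Pre(a)$, propositional effects $\mathit{Eff}(a)$, numerical effects $N(a)\subseteq\{Inc(X),Dec(X)\}$ (at most one per variable; $Dec(X)\in N(a)$ implies $X>0\in Pre(a)$). A state assigns truth values to the propositional variables and reals $\ge0$ to $V$; initial states satisfy $I$ (closed world); goal states satisfy $G$; for applicable $a$, successors apply propositional effects, strictly increase $X$ for $Inc(X)$, strictly decrease $X$ for $Dec(X)$, leave the rest unchanged. For $\epsilon>0$, an $\epsilon$-trajectory is such a sequence $s_0,a_0,s_1,\dots$ from an initial state in which every change of a variable has magnitude $\ge\epsilon$ unless it goes from a value $<\epsilon$ to $0$. Policies map states to actions depending only on the truth values of the propositional atoms and the atoms $X=0$; a maximal $\pi$-trajectory is infinite without goal, ends at its first goal state, or ends where $\pi$ is undefined/inapplicable; $\pi$ solves a QNP iff for every $\epsilon>0$ every maximal $\epsilon$-$\pi$-trajectory reaches a goal state. The FOND problem $T(Q)$: $n=|F|+|V|$, $Max=1+2^n$. Propositional variables: $F$, $p_{X=0}$ ($X\in V$; $X=0$/$X>0$ denote $p_{X=0}$/$\neg p_{X=0}$), $in(X)$, $depth(d)$ ($0\le d\le|V|$),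 $index(X,d)$ ($1\le d\le|V|$), counters $c(d)$ ($0\le d\le|V|$), $c_T$ over $\{0,\dots,Max\}$ encoded in binary. Initial state: $I$ plus $depth(0)$, counters $0$, other new atoms false; goal $G$. Actions: $Push(X,d)$ ($0\le d<|V|$): pre $\neg in(X),depth(d),c(d)<Max$; eff $in(X),index(X,d+1),depth(d+1),\neg depth(d),c(d):=c(d)+1,c(d+1):=0$. $Pop(X,d)$ ($1\le d\le|V|$): pre $in(X),index(X,d),depth(d)$; eff $\neg in(X),\neg index(X,d),\neg depth(d),depth(d-1)$. $Move$: pre $depth(0),c_T<Max$; eff $c_T:=c_T+1$. For $a\in O$ with no $Dec$ effect: action $a$ with pre $Pre(a)$ plus $\neg in(Y)$ for each $Inc(Y)\in N(a)$, eff $\mathit{Eff}(a)$ plus $Y>0$ for each $Inc(Y)\in N(a)$. For $a$ with a $Dec$ effect, $X$ with $Dec(X)\in N(a)$, $1\le d\le|V|$: action $a(X,d)$ with pre $Pre(a)$, $\neg in(Y)$ for $Inc(Y)\in N(a)$, $index(X,d)$; eff $\mathit{Eff}(a)$, $Y>0$ for $Inc(Y)\in N(a)$, nondeterministic $Z>0\mid Z=0$ for each $Dec(Z)\in N(a)$, $c(d'):=0$ for $d\le d'\le|V|$. A strong cyclic solution of a FOND problem is a policy such that from every state reachable from the initial state under $\pi$ some goal state is reachable under $\pi$. $Q_M$ is the QNP whose propositional variables are those of $T(Q)$ other than the atoms $p_{X=0}$, whose numerical variables are $V$, whose initial situation, goal and actions are those of $T(Q)$ except that literals $p_{X=0}$/$\neg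 p_{X=0}$ in initial situation, goal and preconditions are read as the numerical literals $X=0$/$X>0$, each effect $Y>0$ originating from $Inc(Y)$ is replaced by $Inc(Y)$, and each nondeterministic effect $Z>0\mid Z=0$ is replaced by $Dec(Z)$. Thus $T(Q)$ is the direct translation of $Q_M$ and a policy for $T(Q)$ is a policy for $Q_M$. *)

(* Defs.v *)
From Stdlib Require Import Reals Relations.
From mathcomp Require Import all_boot.

Set Implicit Arguments.
Unset Strict Implicit.
Unset Printing Implicit Defensive.

Inductive lit (F V : Type) : Type :=
| PosP of F
| NegP of F
| Zero of V
| Posv of V.
Arguments PosP {F V}. Arguments NegP {F V}.
Arguments Zero {F V}. Arguments Posv {F V}.

Inductive numeff : Type := Inc | Dec.

(* A (consistent) set of propositional effects Eff(a) is a map F -> option bool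
   (Some true = p, Some false = ~p, None = p untouched).
   N(a) is a map V -> option numeff (at most one effect per variable). *)
Record qnp : Type := QNP {
  qF : finType;
  qV : finType;
  qO : finType;
  qI : lit qF qV -> bool;
  qG : lit qF qV -> bool;
  qPre : qO -> lit qF qV -> bool;
  qEff : qO -> qF -> option bool;
  qN : qO -> qV -> option numeff;
  qN_dec_pre : forall a X, qN a X = Some Dec -> qPre a (Posv X)
}.

Definition lit_holds (F V : Type) (fv : F -> bool) (z : V -> bool) (l : lit F V) : bool :=
  match l with
  | PosP p => fv p
  | NegP p => ~~ fv p
  | Zero X => z X
  | Posv X => ~~ z X
  end.

(* all literals of the set L hold; z X = true encodes X = 0 *)
Definition sat (F V : Type) (L : lit F V -> bool) (fv : F -> bool) (z : V -> bool) : Prop :=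
  forall l, L l -> lit_holds fv z l.

Definition apply_eff (F : Type) (e : F -> option bool) (fv : F -> bool) : F -> bool :=
  fun p => match e p with Some b => b | None => fv p end.

(* A QNP whose propositional part is given by an abstract type of
   propositional valuations gB (used for Q_M, whose counters are
   multi-valued), numerical variables gV, actions gA.  Conditions are
   predicates of the propositional valuation and of the truth values of
   the atoms X = 0 (z X = true iff X = 0). *)
Record gqnp : Type := GQNP {
  gB : Type;
  gV : finType;
  gA : Type;
  ginit : gB -> (gV -> bool) -> Prop;
  ggoal : gB -> (gV -> bool) -> Prop;
  gpre  : gA -> gB -> (gV -> bool) -> Prop;
  gpeff : gA -> gB -> gB;
  gneff : gA -> gV -> option numeff
}.

Section GSem.
Local Open Scope R_scope.
Variable Q : gqnp.

Definition zpat (v : gV Q -> R) (z : gV Q -> bool) : Prop :=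
  forall X, z X = true <-> v X = 0.

Definition gpolicy := gB Q -> (gV Q -> bool) -> option (gA Q).

Definition gstate := (gB Q * (gV Q -> R))%type.

Definition g_is_init (s : gstate) : Prop :=
  (forall X, (0 <= s.2 X)) /\ exists z, zpat s.2 z /\ ginit s.1 z.

Definition g_is_goal (s : gstate) : Prop :=
  exists z, zpat s.2 z /\ ggoal s.1 z.

Definition g_applicable (a : gA Q) (s : gstate) : Prop :=
  exists z, zpat s.2 z /\ gpre a s.1 z.

Definition g_chooses (pi : gpolicy) (s : gstate) (a : gA Q) : Prop :=
  exists z, zpat s.2 z /\ pi s.1 z = Some a.

Definition g_succ (a : gA Q) (s s' : gstate) : Prop :=
  s'.1 = gpeff a s.1 /\
  forall X, (0 <= s'.2 X) /\
    match gneff a X with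
    | Some Inc => (s.2 X < s'.2 X)
    | Some Dec => (s'.2 X < s.2 X)
    | None => s'.2 X = s.2 X
    end.

Definition eps_change (eps : R) (s s' : gstate) : Prop :=
  forall X, s'.2 X <> s.2 X ->
    (eps <= Rabs (s'.2 X - s.2 X)) \/ ((s.2 X < eps) /\ s'.2 X = 0).

(* A trajectory s_0, a_0, s_1, ... ; len = None: infinite,
   len = Some n: states s_0 .. s_n and actions a_0 .. a_(n-1). *)
Definition in_steps (len : option nat) (i : nat) : Prop :=
  match len with None => True | Some n => (i < n)%N end.

Definition in_states (len : option nat) (i : nat) : Prop :=
  match len with None => True | Some n => (i <= n)%N end.

Definition max_eps_pi_traj (eps : R) (pi : gpolicy)
    (st : nat -> gstate) (ac : nat -> gA Q) (len : option nat) : Prop :=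
  g_is_init (st 0%N) /\
  (forall i, in_steps len i ->
     ~ g_is_goal (st i) /\
     g_chooses pi (st i) (ac i) /\
     g_applicable (ac i) (st i) /\
     g_succ (ac i) (st i) (st i.+1) /\
     eps_change eps (st i) (st i.+1)) /\
  (match len with
   | None => True
   | Some n => g_is_goal (st n) \/
               (forall a, g_chooses pi (st n) a -> ~ g_applicable a (st n))
   end).

Definition qnp_solves (pi : gpolicy) : Prop :=
  forall eps : R, (0 < eps) ->
  forall st ac len, max_eps_pi_traj eps pi st ac len ->
  exists i, in_states len i /\ g_is_goal (st i).

End GSem.

Record fond : Type := FOND {
  fS : Type;
  fA : Type;
  finit : fS;
  fgoal : fS -> Prop;
  fpre : fA -> fS -> Prop;
  fsucc : fA -> fS -> fS -> Prop
}.

Definition fpolicy (P : fond) := fS P -> option (fA P).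

Definition fstep (P : fond) (pi : fpolicy P) (s s' : fS P) : Prop :=
  ~ fgoal s /\ exists a, pi s = Some a /\ fpre a s /\ fsucc a s s'.

Definition freach (P : fond) (pi : fpolicy P) : fS P -> fS P -> Prop :=
  clos_refl_trans (fS P) (fstep pi).

Definition strong_cyclic (P : fond) (pi : fpolicy P) : Prop :=
  forall s, freach pi (finit P) s -> exists g, freach pi s g /\ fgoal g.

Section Translation.
Variable Q : qnp.
Local Notation F := (qF Q).
Local Notation V := (qV Q).
Local Notation O := (qO Q).

Definition nvars : nat := #|F| + #|V|.
Definition nV : nat := #|V|.
Definition Max : nat := 1 + 2 ^ nvars.

(* Propositional atoms of T(Q) other than the p_{X=0}.  Atoms depth(d),
   index(X,d), c(d) are indexed by nat; only 0 <= d <= |V| are ever used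
   (others stay constantly false / 0).  Counters c(d), c_T (binary encoded
   in the paper) are represented by their values. *)
Record tprop : Type := TProp {
  tF : F -> bool;
  tin : V -> bool;
  tdepth : nat -> bool;
  tindex : V -> nat -> bool;
  tc : nat -> nat;
  tcT : nat
}.

Inductive tact : Type :=
| Push of V & nat
| Pop of V & nat
| Move
| OrigA of O               (* a, for a with no Dec effect *)
| OrigD of O & V & nat.    (* a(X,d), for Dec(X) in N(a) *)

Definition upd_bool (f : nat -> bool) (k : nat) (b : bool) : nat -> bool :=
  fun j => if j == k then b else f j.
Definition upd_nat (f : nat -> nat) (k : nat) (b : nat) : nat -> nat :=
  fun j => if j == k then b else f j.
Definition upd_V (f : V -> bool) (X : V) (b : bool) : V -> bool :=
  fun Y => if Y == X then b else f Y.
Definition upd_index (f : V -> nat -> bool) (X : V) (d : nat) (b : bool) :=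
  fun Y j => if (Y == X) && (j == d) then b else f Y j.

Definition inc_ok (a : O) (t : tprop) : Prop :=
  forall Y, qN a Y = Some Inc -> tin t Y = false.

(* preconditions of T(Q) (z X = true is the atom p_{X=0}) *)
Definition tpre (act : tact) (t : tprop) (z : V -> bool) : Prop :=
  match act with
  | Push X d => (d < nV)%N /\ tin t X = false /\ tdepth t d /\ (tc t d < Max)%N
  | Pop X d => (1 <= d <= nV)%N /\ tin t X /\ tindex t X d /\ tdepth t d
  | Move => tdepth t 0 /\ (tcT t < Max)%N
  | OrigA a => (forall X, qN a X <> Some Dec) /\ sat (qPre a) (tF t) z /\ inc_ok a t
  | OrigD a X d => qN a X = Some Dec /\ (1 <= d <= nV)%N /\
                   sat (qPre a) (tF t) z /\ inc_ok a t /\ tindex t X d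
  end.

Definition tpeff (act : tact) (t : tprop) : tprop :=
  match act with
  | Push X d =>
      TProp (tF t) (upd_V (tin t) X true)
            (upd_bool (upd_bool (tdepth t) d false) d.+1 true)
            (upd_index (tindex t) X d.+1 true)
            (upd_nat (upd_nat (tc t) d (tc t d).+1) d.+1 0)
            (tcT t)
  | Pop X d =>
      TProp (tF t) (upd_V (tin t) X false)
            (upd_bool (upd_bool (tdepth t) d false) d.-1 true)
            (upd_index (tindex t) X d false)
            (tc t) (tcT t)
  | Move => TProp (tF t) (tin t) (tdepth t) (tindex t) (tc t) (tcT t).+1
  | OrigA a => TProp (apply_eff (qEff a) (tF t)) (tin t) (tdepth t) (tindex t) (tc t) (tcT t)
  | OrigD a X d =>
      TProp (apply_eff (qEff a) (tF t)) (tin t) (tdepth t) (tindex t)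
            (fun j => if (d <= j <= nV)%N then 0 else tc t j) (tcT t)
  end.

Definition tneff (act : tact) : V -> option numeff :=
  match act with
  | OrigA a => qN a
  | OrigD a _ _ => qN a
  | _ => fun _ => None
  end.

(* initial situation of T(Q): I (closed world, p_{X=0} true iff X=0 in I)
   plus depth(0), counters 0, other new atoms false *)
Definition tinit_prop : tprop :=
  TProp (fun p => @qI Q (PosP p)) (fun _ => false) (fun d => d == 0)
        (fun _ _ => false) (fun _ => 0) 0.
Definition tinit_z : V -> bool := fun X => @qI Q (Zero X).

Definition tgoal (t : tprop) (z : V -> bool) : Prop := sat (@qG Q) (tF t) z.

(* the FOND problem T(Q): states = (other atoms, atoms p_{X=0});
   Inc(Y) becomes Y>0, Dec(Z) becomes Z>0 | Z=0 *)
Definition T_succ (act : tact) (s s' : tprop * (V -> bool)) : Prop :=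
  s'.1 = tpeff act s.1 /\
  forall Y, match tneff act Y with
            | Some Inc => s'.2 Y = false
            | Some Dec => True
            | None => s'.2 Y = s.2 Y
            end.

Definition TQ : fond :=
  @FOND (tprop * (V -> bool))%type tact
        (tinit_prop, tinit_z)
        (fun s => tgoal s.1 s.2)
        (fun a s => tpre a s.1 s.2)
        T_succ.

Definition QM : gqnp :=
  @GQNP tprop V tact
        (fun t z => t = tinit_prop /\ z = tinit_z)
        tgoal tpre tpeff tneff.

Definition policy_QM (pi : fpolicy TQ) : gpolicy QM := fun t z => pi (t, z).

End Translation.

(* Main.v *)
Require Import Defs.
From Stdlib Require Import Reals Relations Lra.
From Stdlib Require Import Classical FunctionalExtensionality.
From mathcomp Require Import all_boot zify.

Set Implicit Arguments.
Unset Strict Implicit.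
Unset Printing Implicit Defensive.

Definition zof (V : Type) (v : V -> R) : V -> bool :=
  fun X => if Req_dec_T (v X) R0 then true else false.

Lemma zof_pat (G : gqnp) (v : gV G -> R) : zpat v (zof v).
Proof. move=> X; rewrite /zof; case: Req_dec_T => //= ->; split=> //. Qed.

Lemma zpat_zof (G : gqnp) (v : gV G -> R) z : zpat v z -> z = zof v.
Proof.
move=> H; apply: functional_extensionality => X; rewrite /zof.
case: Req_dec_T => h; first by apply/H.
by case E: (z X) => //; move/H: E.
Qed.

Definition tinv (Q : qnp) (t : tprop Q) (D : nat) : Prop :=
  (D <= nV Q)%N /\ (forall j, tdepth t j = (j == D)) /\
  (forall X d, tindex t X d -> tin t X /\ (d <= D)%N) /\
  (forall X d d', tindex t X d -> tindex t X d' -> d = d') /\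
  (forall X Y d, tindex t X d -> tindex t Y d -> X = Y) /\
  (forall j, (tc t j <= Max Q)%N).

Lemma tinv_init Q : tinv (tinit_prop Q) 0.
Proof. rewrite /tinv /=; do ! split => //. Qed.

Lemma tinv_step Q (t : tprop Q) D a z : tinv t D -> tpre a t z ->
  exists D', tinv (tpeff a t) D' /\
   match a with Push _ _ => D' = D.+1 | Pop _ _ => D' = D.-1 | _ => D' = D end.
Proof.
case=> [hD [hdep [hidx [hu1 [hu2 hc]]]]].
case: a => [X d|X d||o|o X d] /=.
- case=> [hd [hin [hdd hcd]]]; rewrite hdep in hdd; move/eqP: hdd => ?; subst d.
  exists D.+1; split=> //; rewrite /tinv /= /upd_bool /upd_V /upd_index /upd_nat.
  split=> //; split.
    move=> j; case: (j =P D.+1) => [//|_]; case: (j =P D) => [//|/eqP ne2].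
    by rewrite hdep (negbTE ne2).
  split.
    move=> Y d; case: ifP => [/andP[/eqP -> /eqP ->]|_]; first by rewrite eqxx.
    move=> hY; have [hi h] := hidx _ _ hY; split; first by case: ifP.
    exact: (leq_trans h).
  split.
    move=> Y d d'; case: (eqVneq Y X) => [->|ne] /=; last exact: hu1.
    case: (eqVneq d D.+1) => [->|nd]; case: (eqVneq d' D.+1) => [->|nd'] //=;
      try (by move=> _ /hidx []; rewrite hin); by move=> /hidx []; rewrite hin.
  split.
    move=> Y1 Y2 d; case: (eqVneq Y1 X) => [->|n1]; case: (eqVneq Y2 X) => [->|n2] //=;
      case: (eqVneq d D.+1) => [->|nd] //=; try exact: hu2.
    + by move=> _ /hidx [_]; rewrite ltnn.
    + by move=> /hidx [_]; rewrite ltnn.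
  move=> j; case: ifP => // _; case: ifP => // _; exact: hc.
- case=> [/andP[hd1 hd2] [hin [hidd hdd]]]; rewrite hdep in hdd; move/eqP: hdd => ?; subst d.
  exists D.-1; split=> //; rewrite /tinv /= /upd_bool /upd_V /upd_index.
  split; first by apply: leq_trans (leq_pred _) hD.
  split.
    move=> j; case: (j =P D.-1) => [//|_]; case: (j =P D) => [//|/eqP ne2].
    by rewrite hdep (negbTE ne2).
  split.
    move=> Y d; case: ifP => // /negbT hne hY.
    have [hiY hdY] := hidx _ _ hY.
    have dD : d != D.
      apply/eqP => ?; subst d; have := hu2 _ _ _ hY hidd => ?; subst Y.
      by rewrite !eqxx in hne.
    split.
      case: (Y =P X) => [?|//]; subst Y.
      by have := hu1 _ _ _ hY hidd => ?; subst d; rewrite eqxx in dD.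
    by move: hdY dD; clear; lia.
  split.
    move=> Y d d'; do 2 (case: ifP => // _); exact: hu1.
  split.
    move=> Y1 Y2 d; do 2 (case: ifP => // _); exact: hu2.
  exact: hc.
- move=> _; exists D; split=> //; rewrite /tinv /=; do ! split => //.
- move=> _; exists D; split=> //; rewrite /tinv /=; do ! split => //.
- move=> _; exists D; split=> //; rewrite /tinv /=; do ! split => //.
  move=> j; case: ifP => // _; exact: hc.
Qed.

Definition stepok Q (eps : R) (t : nat -> tprop Q) (v : nat -> qV Q -> R)
  (ac : nat -> tact Q) (i : nat) : Prop :=
  tpre (ac i) (t i) (zof (v i)) /\ t i.+1 = tpeff (ac i) (t i) /\
  (forall X, Rle R0 (v i.+1 X) /\
     match tneff (ac i) X with
     | Some Inc => Rlt (v i X) (v i.+1 X)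
     | Some Dec => Rlt (v i.+1 X) (v i X)
     | None => v i.+1 X = v i X end) /\
  (forall X, v i.+1 X <> v i X ->
     Rle eps (Rabs (Rminus (v i.+1 X) (v i X))) \/ (Rlt (v i X) eps /\ v i.+1 X = R0)).

Lemma nat_potential (c : nat -> nat) (M T : nat) (P : nat -> Prop) :
  (forall i, (T <= i)%N -> (c i <= c i.+1)%N) ->
  (forall i, (T <= i)%N -> P i -> (c i < M)%N /\ (c i < c i.+1)%N) ->
  exists T', forall i, (T' <= i)%N -> ~ P i.
Proof.
move=> hm hp.
have m2 : forall i j, (T <= i)%N -> (i <= j)%N -> (c i <= c j)%N.
  move=> i j Ti; elim: j => [|j IH]; first by rewrite leqn0 => /eqP ->.
  rewrite leq_eqVlt => /orP[/eqP ->//|]; rewrite ltnS => ij.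
  apply: leq_trans (IH ij) (hm _ _); exact: leq_trans ij.
suff: forall n i, (T <= i)%N -> (M - c i <= n)%N -> exists T', forall i, (T' <= i)%N -> ~ P i.
  by move/(_ M T (leqnn T)); apply; apply: leq_subr.
elim=> [|n IH] i Ti hn.
  exists i => j ij Pj; have [h1 _] := hp j (leq_trans Ti ij) Pj.
  have := m2 _ _ Ti ij; lia.
case: (classic (exists j, (i <= j)%N /\ P j)) => [[j [ij Pj]]|no].
  have Tj := leq_trans Ti ij.
  have [h1 h2] := hp j Tj Pj; have := m2 _ _ Ti ij => h3.
  apply: (IH j.+1); first exact: leq_trans Tj _.
  lia.
exists i => j ij Pj; apply: no; by exists j.
Qed.

Lemma fin_combine (T : finType) (P : T -> nat -> Prop) :
  (forall x, exists N, forall j, (N <= j)%N -> P x j) ->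
  exists N, forall x j, (N <= j)%N -> P x j.
Proof.
move=> h.
suff: forall l : seq T, exists N, forall x, x \in l -> forall j, (N <= j)%N -> P x j.
  case/(_ (enum T)) => N hN; exists N => x j; apply: hN; by rewrite mem_enum.
elim=> [|a l [N hN]]; first by exists 0.
have [Na hNa] := h a; exists (maxn N Na) => x; rewrite inE => /orP[/eqP->|xl] j hj.
  apply: hNa; exact: leq_trans (leq_maxr _ _) hj.
apply: hN => //; exact: leq_trans (leq_maxl _ _) hj.
Qed.

Lemma traj_inv Q eps t v ac : (forall i, @stepok Q eps t v ac i) -> tinv (t 0) 0 ->
  forall i, exists D, tinv (t i) D.
Proof.
move=> hs h0; elim=> [|i [D hD]]; first by exists 0.
have [hp [ht _]] := hs i; rewrite ht.
by have [D' [? _]] := tinv_step hD hp; exists D'.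
Qed.

Lemma traj_nonneg Q eps t v ac : (forall i, @stepok Q eps t v ac i) ->
  (forall X, Rle R0 (v 0 X)) -> forall i X, Rle R0 (v i X).
Proof.
move=> hs h0; case=> [|i] X //; have [_ [_ [h _]]] := hs i; by case: (h X).
Qed.

Lemma step_noinc Q eps t v ac i X : @stepok Q eps t v ac i -> tin (t i) X ->
  tneff (ac i) X <> Some Inc.
Proof.
case=> hp _ hin; move: hp; case: (ac i) => //= [o|o Y d].
  by case=> _ [_ hok] he; move: (hok _ he); rewrite hin.
by case=> _ [_ [_ [hok _]]] he; move: (hok _ he); rewrite hin.
Qed.

Lemma step_decpos Q eps t v ac i X : @stepok Q eps t v ac i ->
  tneff (ac i) X = Some Dec -> v i X <> R0.
Proof.
case=> hp _; move: hp; case: (ac i) => //= [o|o Y d].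
  by case=> h _ he; case: (h _ he).
case=> _ [_ [hs _]] he.
have := hs _ (qN_dec_pre he); rewrite /= /zof; by case: Req_dec_T.
Qed.
Open Scope R_scope.

Lemma fin_dec Q eps t v ac : (forall i, @stepok Q eps t v ac i) ->
  (forall i X, Rle R0 (v i X)) -> Rlt R0 eps ->
  forall X T, (forall i, (T <= i)%N -> tin (t i) X) ->
  exists T', forall i, (T' <= i)%N -> tneff (ac i) X <> Some Dec.
Proof.
move=> hs hnn he X T hin.
have mono : forall i, (T <= i)%N -> Rle (v i.+1 X) (v i X).
  move=> i Ti; have := step_noinc (hs i) (hin _ Ti).
  have [_ [_ [h _]]] := hs i; case: (h X); case: (tneff (ac i) X) => [[]|] //; lra.
have m2 : forall i j, (T <= i)%N -> (i <= j)%N -> Rle (v j X) (v i X).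
  move=> i j Ti; elim: j => [|j IH]; first by rewrite leqn0 => /eqP ->; lra.
  rewrite leq_eqVlt => /orP[/eqP ->|]; first lra.
  rewrite ltnS => ij; have := IH ij; have := mono j (leq_trans Ti ij); lra.
suff: forall n i, (T <= i)%N -> Rle (v i X) (INR n * eps) ->
   exists T', forall i, (T' <= i)%N -> tneff (ac i) X <> Some Dec.
  have [n hn] := INR_unbounded (v T X / eps).
  move/(_ n T (leqnn T)); apply.
  have : Rlt (v T X / eps * eps) (INR n * eps) by apply: Rmult_lt_compat_r.
  have -> : v T X / eps * eps = v T X by field; lra.
  lra.
elim=> [|n IH] i Ti hn.
all: case: (classic (exists j, (i <= j)%N /\ tneff (ac j) X = Some Dec)) => [[j [ij hj]]|no];
  last by (exists i => j ij hj; apply: no; exists j).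
all: have Tj := leq_trans Ti ij; have := m2 _ _ Ti ij => hvj.
all: have := step_decpos (hs j) hj => hnz; have := hnn j X => hp.
  have : INR 0 = R0 by []; move=> e0; rewrite e0 in hn; lra.
apply: (IH j.+1); first exact: leq_trans Tj _.
have [_ [_ [h he2]]] := hs j; case: (h X); rewrite hj => _ hlt.
have hm : Rle R0 (INR n * eps) by apply: Rmult_le_pos; [apply: pos_INR|lra].
rewrite S_INR in hn.
case: (he2 X); first lra.
  rewrite Rabs_left; lra.
lra.
Qed.
Close Scope R_scope.

Definition notD Q (a : tact Q) : Prop := match a with OrigD _ _ _ => False | _ => True end.

Lemma tinv_dep Q (t : tprop Q) D j : tinv t D -> tdepth t j = (j == D).
Proof. by case=> _ [h _]. Qed.

Lemma level_step Q (t : tprop Q) D a z k : tinv t D -> tpre a t z -> (k <= D)%N ->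
  (forall j, tdepth (tpeff a t) j -> (k <= j)%N) ->
  forall Y d, (d <= k)%N -> tindex (tpeff a t) Y d = tindex t Y d.
Proof.
move=> hi; case: a => [X d0|X d0||o|o X d0] //= hp kD hs Y d dk.
- case: hp => _ [_ [hd _]]; rewrite (tinv_dep _ hi) in hd; move/eqP: hd => ?; subst d0.
  rewrite /upd_index; case: ifP => // /andP[_ /eqP e]; lia.
- case: hp => [/andP[h1 _] [_ [_ hd]]]; rewrite (tinv_dep _ hi) in hd; move/eqP: hd => ?; subst d0.
  have := hs D.-1; rewrite /upd_bool eqxx => /(_ isT) kD1.
  rewrite /upd_index; case: ifP => // /andP[_ /eqP e]; lia.
Qed.

Lemma counter_step Q (t : tprop Q) D a z k : tinv t D -> tpre a t z -> (k <= D)%N ->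
  (forall o Y d, a = OrigD o Y d -> (k < d)%N) ->
  (tc t k <= tc (tpeff a t) k)%N /\
  (forall X, a = Push X k -> (tc t k < Max Q)%N /\ (tc t k < tc (tpeff a t) k)%N).
Proof.
move=> hi; case: a => [X d0|X d0||o|o X d0] //= hp kD hD.
- case: hp => _ [_ [hd hc]]; rewrite (tinv_dep _ hi) in hd; move/eqP: hd => ?; subst d0.
  split.
    rewrite /upd_nat; case: ifP => [/eqP e|_]; first lia.
    case: ifP => [/eqP ->|_] //; exact: leqnSn.
  move=> Y [_ ?]; subst D.
  by rewrite /upd_nat; case: ifP => [/eqP e|_]; [lia| rewrite eqxx].
- split; last by move=> ? ?; discriminate.
  have := hD o X d0 erefl => h; case: ifP => //; lia.
Qed.

Lemma claim Q eps t v ac : (forall i, @stepok Q eps t v ac i) ->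
  (forall i, exists D, tinv (t i) D) ->
  (forall i X, Rle R0 (v i X)) -> Rlt R0 eps ->
  forall m k T, (nV Q < k + m)%N ->
  (forall i j, (T <= i)%N -> tdepth (t i) j -> (k <= j)%N) ->
  exists T', forall i, (T' <= i)%N -> notD (ac i).
Proof.
move=> hs hinv hnn he; elim=> [|m IH] k T hk hseg.
  have [D hD] := hinv T; have := hseg T D (leqnn T); rewrite (tinv_dep _ hD) eqxx.
  move=> /(_ isT); case: hD => hD _; lia.
have segD : forall i D, (T <= i)%N -> tinv (t i) D -> (k <= D)%N.
  by move=> i D Ti hD; apply: (hseg i D Ti); rewrite (tinv_dep _ hD) eqxx.
have hfix : forall i, (T <= i)%N -> forall Y d, (d <= k)%N -> tindex (t i) Y d = tindex (t T) Y d.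
  elim=> [|i IHi]; first by rewrite leqn0 => /eqP ->.
  rewrite leq_eqVlt => /orP[/eqP ->//|]; rewrite ltnS => Ti Y d dk.
  have [D hD] := hinv i; have [hp [ht _]] := hs i.
  rewrite -(IHi Ti Y d dk) ht; apply: (level_step (k:=k) hD hp) => //.
    exact: segD _ _ Ti hD.
  move=> j; rewrite -ht; apply: hseg; exact: leq_trans Ti _.
pose S Y := exists d, (d <= k)%N /\ tindex (t T) Y d.
have tinS : forall Y i, S Y -> (T <= i)%N -> tin (t i) Y.
  move=> Y i [d [dk hd]] Ti; have [D [_ [_ [hidx _]]]] := hinv i.
  by apply: (proj1 (hidx Y d _)); rewrite hfix.
have [T1 hT1] : exists N, forall Y j, (N <= j)%N -> S Y -> tneff (ac j) Y <> Some Dec.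
  apply: fin_combine => Y; case: (classic (S Y)) => [hY|hY]; last by exists 0.
  have [T' hT'] := fin_dec hs hnn he (fun i Ti => tinS Y i hY Ti).
  by exists T' => j hj _; apply: hT'.
pose T1' := maxn T T1.
have hnoD : forall i, (T1' <= i)%N -> forall o Y d, ac i = OrigD o Y d -> (k < d)%N.
  move=> i hi o Y d e; rewrite ltnNge; apply/negP => dk.
  have Ti : (T <= i)%N by exact: leq_trans (leq_maxl _ _) hi.
  have [hp _] := hs i; rewrite e /= in hp; case: hp => hdec [_ [_ [_ hidx]]].
  have hSY : S Y by exists d; split => //; rewrite -(hfix i Ti).
  apply: (hT1 Y i _ hSY); first exact: leq_trans (leq_maxr _ _) hi.
  by rewrite e.
have [T2 hT2] : exists T', forall i, (T' <= i)%N -> ~ (exists X, ac i = Push X k).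
  apply: (@nat_potential (fun i => tc (t i) k) (Max Q) T1').
    move=> i hi; have [D hD] := hinv i; have [hp [ht _]] := hs i.
    have Ti : (T <= i)%N by exact: leq_trans (leq_maxl _ _) hi.
    rewrite ht; exact: (proj1 (counter_step hD hp (segD _ _ Ti hD) (hnoD i hi))).
  move=> i hi [X hX]; have [D hD] := hinv i; have [hp [ht _]] := hs i.
  have Ti : (T <= i)%N by exact: leq_trans (leq_maxl _ _) hi.
  rewrite ht; exact: (proj2 (counter_step hD hp (segD _ _ Ti hD) (hnoD i hi)) X hX).
pose T3 := maxn T2 T1'.
have T3T : (T <= T3)%N by rewrite /T3 /T1' leq_max leq_maxl orbT.
case: (classic (forall i j, (T3 <= i)%N -> tdepth (t i) j -> (k.+1 <= j)%N)) => [hall|hno].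
  by apply: (IH k.+1 T3) => //; rewrite addSnnS.
have [i0 [j0 [hi0 [hd0 hj0]]]] : exists i j, (T3 <= i)%N /\ tdepth (t i) j /\ ~ (k.+1 <= j)%N.
  apply: NNPP => hc; apply: hno => i j hi hd; apply: NNPP => hn; apply: hc.
  by exists i, j.
have Ti0 : (T <= i0)%N by exact: leq_trans T3T hi0.
have ej0 : j0 = k by have := hseg _ _ Ti0 hd0; move: hj0; clear; lia.
subst j0.
have stay : forall i, (i0 <= i)%N -> tdepth (t i) k.
  elim=> [|i IHi]; first by rewrite leqn0 => /eqP <-.
  rewrite leq_eqVlt => /orP[/eqP <-//|]; rewrite ltnS => ii.
  have hk0 := IHi ii; have [D hD] := hinv i; have [hp [ht _]] := hs i.
  rewrite (tinv_dep _ hD) in hk0; move/eqP: hk0 => ?; subst D.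
  have T3i : (T3 <= i)%N by exact: leq_trans hi0 ii.
  have T2i : (T2 <= i)%N by exact: leq_trans (leq_maxl _ _) T3i.
  have Ti : (T <= i)%N by exact: leq_trans T3T T3i.
  move: hp; rewrite ht; case E: (ac i) => [X d|X d||o|o X d] //= hp.
  - case: hp => _ [_ [hd _]]; rewrite (tinv_dep _ hD) in hd; move/eqP: hd => ?; subst d.
    by case: (hT2 i T2i); exists X.
  - case: hp => [/andP[h1 _] [_ [_ hd]]]; rewrite (tinv_dep _ hD) in hd; move/eqP: hd => ?; subst d.
    have := hseg i.+1 k.-1 (leq_trans Ti (leqnSn _)); rewrite ht E /= /upd_bool eqxx.
    move=> /(_ isT); lia.
  - by rewrite (tinv_dep _ hD).
  - by rewrite (tinv_dep _ hD).
  - by rewrite (tinv_dep _ hD).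
exists i0 => i ii; case E: (ac i) => [X d|X d||o|o X d] //=.
have [D hD] := hinv i; have [hp _] := hs i; rewrite E /= in hp.
case: hp => _ [_ [_ [_ hidx]]].
have hk0 := stay i ii; rewrite (tinv_dep _ hD) in hk0; move/eqP: hk0 => ?; subst D.
have [_ [_ [hix _]]] := hD; have [_ dk] := hix _ _ hidx.
have T1i : (T1' <= i)%N.
  apply: leq_trans (leq_trans (leq_maxr T2 _) hi0) ii.
have := hnoD i T1i o X d E; lia.
Qed.

Theorem theorem12 (Q : qnp) (pi : fpolicy (TQ Q)) :
  strong_cyclic pi -> qnp_solves (policy_QM pi).
Proof.
move=> hsc eps he st ac len [hinit [hsteps hend]].
pose t : nat -> tprop Q := fun i => (st i).1.
pose v : nat -> qV Q -> R := fun i => (st i).2.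
pose proj i : fS (TQ Q) := (t i, zof (v i)).
have hgoal : forall i, g_is_goal (st i) <-> tgoal (t i) (zof (v i)).
  move=> i; split; first by case=> z [hz hg]; rewrite -(zpat_zof hz).
  by move=> hg; exists (zof (v i)); split => //; apply: zof_pat.
have hstep : forall i, in_steps len i ->
  [/\ stepok eps t v ac i, ~ tgoal (t i) (zof (v i)) & pi (proj i) = Some (ac i)].
  move=> i hi; have [hng [[z1 [hz1 hch]] [[z2 [hz2 hap]] [[hs1 hs2] hec]]]] := hsteps i hi.
  move: hch hap; rewrite (zpat_zof hz1) (zpat_zof hz2) => hch hap.
  split => //; last by move/hgoal.
have hnn : forall i, in_states len i -> forall X, Rle R0 (v i X).
  elim=> [|i IH] hi X; first by case: hinit => h _; apply: h.
  have hi' : in_steps len i by case: len hsteps hend hstep IH hi => //.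
  have [[_ [_ [h _]]] _ _] := hstep i hi'; by case: (h X).
have hfstep : forall i, in_steps len i -> fstep pi (proj i) (proj i.+1).
  move=> i hi; have [[hp [ht [hn _]]] hng hpi] := hstep i hi.
  have hi' : in_states len i by case: len hsteps hend hstep hnn hi => //= n *; lia.
  split => //; exists (ac i); split => //; split => //; split => //= Y.
  case: (hn Y); case: (tneff (ac i) Y) => [[]|] // _ hh.
    have := hnn i hi' Y; rewrite /zof; case: Req_dec_T => // ?; lra.
  by rewrite /zof hh.
have hreach : forall i, in_states len i -> freach pi (finit (TQ Q)) (proj i).
  elim=> [|i IH] hi.
    case: hinit => _ [z [hz [h1 h2]]]; rewrite /proj /t h1 -(zpat_zof hz) h2.
    exact: rt_refl.
  have hi' : in_steps len i by case: len hsteps hend hstep hnn hfstep IH hi => //.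
  apply: rt_trans (IH _) (rt_step _ _ _ _ (hfstep i hi')).
  by case: len hsteps hend hstep hnn hfstep IH hi hi' => //= n *; lia.
case: len hsteps hend hstep hnn hfstep hreach => [n|] hsteps hend hstep hnn hfstep hreach.
  case: hend => [hg|hno]; first by exists n; split => //; apply: leqnn.
  have [g [hr hg]] := hsc _ (hreach n (leqnn n)).
  move: hg; case: (clos_rt_rt1n _ _ _ _ hr) => [hg|y z hst _ _].
    by exists n; split; [exact: leqnn | apply/hgoal; exact: hg].
  case: hst => _ [a [hpa [hpre _]]].
  by case: (hno a); [exists (zof (v n)); split => //; apply: zof_pat
                    | exists (zof (v n)); split => //; apply: zof_pat].
exfalso.
have hs : forall i, stepok eps t v ac i by move=> i; case: (hstep i I).
have hinv : forall i, exists D, tinv (t i) D.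
  apply: (traj_inv hs); case: hinit => _ [z [_ [h1 _]]]; rewrite /t h1; exact: tinv_init.
have [T' hT'] := @claim Q eps t v ac hs hinv (fun i => hnn i I) he (nV Q).+1 0 0 (ltnSn _) (fun _ _ _ _ => leq0n _).
have hdet : forall i, (T' <= i)%N -> forall s', fstep pi (proj i) s' -> s' = proj i.+1.
  move=> i hi [s1 s2] [_ [a [hpa [hpre [h1 h2]]]]].
  have [[hp [ht [hn _]]] _ hpi] := hstep i I.
  rewrite hpi in hpa; case: hpa => ?; subst a.
  rewrite /proj; congr pair; first by rewrite ht; exact: h1.
  apply: functional_extensionality => Y; have := h2 Y; have := hT' i hi.
  case: (hn Y); case E: (tneff (ac i) Y) => [[]|] _ h hD hh; rewrite /= in hh.
  - rewrite hh /zof; case: Req_dec_T => // ?; have := hnn i I Y; lra.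
  - move: E hp hD; case: (ac i) => //= o.
    by move=> E [h' _]; case: (h' Y).
  - by rewrite hh /zof h.
have hr2 : forall x y, freach pi x y -> forall i, (T' <= i)%N -> x = proj i ->
    exists j, (T' <= j)%N /\ y = proj j.
  move=> x y; elim=> [x0 y0 hst|x0|x0 y0 z0 _ IH1 _ IH2] i hi e; subst.
  - exists i.+1; split; [exact: leq_trans hi _ | exact: hdet hst].
  - by exists i.
  - have [j [hj e2]] := IH1 i hi erefl; subst; exact: IH2 j hj erefl.
have [g [hr hg]] := hsc _ (hreach T' I).
have [j [_ ej]] := hr2 _ _ hr T' (leqnn _) erefl.
subst g; have [_ hng _] := hstep j I; exact: hng hg.
Qed.
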